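(* Let $W\in\mathbb{R}^{m\times n}$ with columns $W_1,\dots,W_n$ and $F=WW^\top$, and assume every $W_i$ is an eigenvector of $F$ with positive eigenvalue. Let $\lambda_k>0$ be an eigenvalue of $F$, $C_k:=\{i:FW_i=\lambda_kW_i\}$ with $p:=|C_k|$, $V_k:=\operatorname{span}\{W_i:i\in C_k\}$, and $M_k:=W_{C_k}^\top W_{C_k}\in\mathbb{R}^{p\times p}$ the Gram matrix of these columns. Then the cluster $C_k$ has simplex geometry if and only if $M_k$ has exactly two eigenspaces $$W_0=\ker(M_k)=\operatorname{span}(\mathbf{1}),\qquad W_1=\operatorname{Im}(M_k)=\mathbf{1}^\perp,$$ with eigenvalue $0$ on $W_0$ and eigenvalue $\lambda_k=\frac{|C_k|}{\dim(V_k)}$ on $W_1$.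
   Context: $\mathbf{1}\in\mathbb{R}^p$ is the all-ones vector. A cluster of $p\ge2$ vectors $(W_i)_{i\in C_k}$ has simplex geometry if $\|W_i\|=1$ for all $i$ and $\langle W_i,W_j\rangle=-\frac{1}{p-1}$ for all $i\neq j$ (equivalently, its Gram matrix is $\frac{p}{p-1}(I-\frac1pJ)$, $J$ the all-ones matrix). *)

(* Defs.v *)
From HB Require Import structures.
From mathcomp Require Import all_boot all_order all_algebra.
Set Implicit Arguments. Unset Strict Implicit. Unset Printing Implicit Defensive.
Import Order.TTheory GRing.Theory Num.Theory.
Local Open Scope ring_scope.

Section Defs.
Variable R : rcfType.

Definition dotc m (u v : 'cV[R]_m) : R := (u^T *m v) 0 0.
Definition normc m (u : 'cV[R]_m) : R := Num.sqrt (dotc u u).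

Definition Fmat m n (W : 'M[R]_(m, n)) : 'M[R]_m := W *m W^T.

Definition cluster m n (W : 'M[R]_(m, n)) (lam : R) : {set 'I_n} :=
  [set i | Fmat W *m col i W == lam *: col i W].

(* W_{C_k}: the m x |C_k| matrix of the columns W_i, i in C_k (in increasing order) *)
Definition clusterMx m n (W : 'M[R]_(m, n)) (lam : R)
  : 'M[R]_(m, #|cluster W lam|) :=
  colsub (fun j : 'I_#|cluster W lam| => enum_val j) W.

Definition gramMx m n (W : 'M[R]_(m, n)) (lam : R) : 'M[R]_#|cluster W lam| :=
  (clusterMx W lam)^T *m clusterMx W lam.

Definition simplex_geometry m p (X : 'M[R]_(m, p)) : Prop :=
  (2 <= p)%N /\
  (forall i : 'I_p, normc (col i X) = 1) /\
  (forall i j : 'I_p, i != j -> dotc (col i X) (col j X) = - (p.-1%:R)^-1).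

End Defs.

(* Main.v *)
Require Import Defs.
From mathcomp Require Import ring lra.
From HB Require Import structures.
From mathcomp Require Import all_boot all_order all_algebra.
Import Order.TTheory GRing.Theory Num.Theory.
Local Open Scope ring_scope.

Lemma Fsym (R : rcfType) m n (W : 'M[R]_(m, n)) : (Fmat W)^T = Fmat W.
Proof. by rewrite /Fmat trmx_mul trmxK. Qed.

Lemma orth (R : rcfType) m n (W : 'M[R]_(m, n)) lam (i k : 'I_n) :
  (exists mu, Fmat W *m col i W = mu *: col i W) ->
  i \notin cluster W lam -> k \in cluster W lam ->
  (col i W)^T *m col k W = 0.
Proof.
move=> [mu Hmu] Hi; rewrite inE => /eqP Hk.
have Hne : mu != lam.
  apply/eqP=> E; move: Hi; rewrite inE Hmu E eqxx //.
have E1 : mu *: ((col i W)^T *m col k W) = lam *: ((col i W)^T *m col k W).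
  have Tz : mu *: (col i W)^T = (mu *: col i W)^T by rewrite linearZ.
  by rewrite [LHS]scalemxAl Tz -Hmu trmx_mul Fsym -mulmxA Hk scalemxAr.
have : (mu - lam) *: ((col i W)^T *m col k W) = 0 by rewrite scalerBl E1 subrr.
move/eqP; rewrite scalemx_eq0 subr_eq0 (negbTE Hne) /=; by move/eqP.
Qed.

Lemma key (R : rcfType) m n (W : 'M[R]_(m, n)) lam :
  (forall i, exists mu, Fmat W *m col i W = mu *: col i W) ->
  Fmat W *m clusterMx W lam = clusterMx W lam *m gramMx W lam.
Proof.
move=> H; set X := clusterMx W lam.
have HX : forall l (k : 'I_#|cluster W lam|), X l k = W l (enum_val k).
  by move=> l k; rewrite /X /clusterMx mxE.
apply/matrixP => a j.
rewrite /Fmat /gramMx -!mulmxA !mxE.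
rewrite (bigID (mem (cluster W lam))) /=.
rewrite [X in _ + X]big1 ?addr0; last first.
  move=> i Hi.
  have := @orth R m n W lam i (enum_val j) (H i) Hi (enum_valP j).
  move/matrixP=> /(_ 0 0); rewrite !mxE => E.
  rewrite -[RHS](mulr0 (W a i)); congr (_ * _); apply: etrans _ E.
  by apply: eq_bigr => l _; rewrite !mxE.
rewrite -/X big_enum_val /=.
apply: eq_bigr => k _; rewrite HX; congr (_ * _).
by rewrite !mxE; apply: eq_bigr => l _; rewrite !mxE.
Qed.
Set Implicit Arguments. Unset Strict Implicit.
Section Aux.
Variable R : fieldType.
Variable p : nat.
Local Notation c := (const_mx 1 : 'M[R]_(p,1)).
Local Notation one := (const_mx 1 : 'M[R]_(1,p)).
Local Notation J := (const_mx 1 : 'M[R]_p).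
Definition Qm : 'M[R]_p := 1%:M - (p%:R)^-1 *: J.

Lemma Jdef : c *m one = J.
Proof. by apply/matrixP=> i j; rewrite !mxE big_ord1 !mxE mulr1. Qed.

Lemma onec : one *m c = (p%:R)%:M.
Proof.
apply/matrixP=> i j; rewrite !ord1 !mxE.
rewrite (eq_bigr (fun _ => 1)); last by move=> l _; rewrite !mxE mulr1.
by rewrite sumr_const card_ord eqxx mulr1n.
Qed.

Lemma AQ k (A : 'M[R]_(k, p)) : A *m Qm = A - (p%:R)^-1 *: ((A *m c) *m one).
Proof. by rewrite /Qm mulmxBr mulmx1 -scalemxAr -mulmxA Jdef. Qed.

Lemma AQ_c k (A : 'M[R]_(k, p)) : A *m c = 0 -> A *m Qm = A.
Proof. by move=> H; rewrite AQ H mul0mx scaler0 subr0. Qed.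

Lemma AQ_0 k (A : 'M[R]_(k, p)) : A *m Qm = 0 -> A = ((p%:R)^-1 *: (A *m c)) *m one.
Proof. by rewrite AQ -scalemxAl => /eqP; rewrite subr_eq0 => /eqP. Qed.

Hypothesis p0 : p%:R != 0 :> R.

Lemma Qc : Qm *m c = 0.
Proof.
rewrite /Qm mulmxBl mul1mx -scalemxAl -Jdef -mulmxA onec mul_mx_scalar.
by rewrite scalerA mulVf // scale1r subrr.
Qed.

Lemma oneQ : one *m Qm = 0.
Proof.
rewrite /Qm mulmxBr mulmx1 -scalemxAr -Jdef mulmxA onec mul_scalar_mx.
by rewrite scalerA mulVf // scale1r subrr.
Qed.

Lemma QQ : Qm *m Qm = Qm.
Proof. exact: AQ_c Qc. Qed.

Lemma Qsym : Qm^T = Qm.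
Proof. by rewrite /Qm linearB /= linearZ /= trmx1 trmx_const. Qed.
End Aux.
Section Eig.
Variable R : fieldType.
Variable n : nat.
Variable M : 'M[R]_n.
Variable lam : R.
Hypothesis HMM : M *m M = lam *: M.

Lemma eig0 : eigenspace M 0 = kermx M.
Proof. by rewrite /eigenspace (_ : 0%:M = 0) ?subr0 //; apply/matrixP=> i j; rewrite !mxE mul0rn. Qed.

Lemma eiglam : lam != 0 -> (eigenspace M lam == M)%MS.
Proof.
move=> l0; apply/andP; split.
  have /sub_kermxP := submx_refl (eigenspace M lam).
  rewrite mulmxBr mul_mx_scalar => /eqP; rewrite subr_eq0 => /eqP E.
  have -> : eigenspace M lam = (lam^-1 *: eigenspace M lam) *m M.
    by rewrite -scalemxAl E scalerA mulVf // scale1r.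
  exact: submxMl.
by apply/sub_kermxP; rewrite mulmxBr mul_mx_scalar HMM subrr.
Qed.

Lemma eigvals a : eigenvalue M a -> a = 0 \/ a = lam.
Proof.
case/eigenvalueP => v Hv v0.
have : (a * a) *: v = (lam * a) *: v.
  by rewrite -!scalerA -Hv scalemxAl -Hv -mulmxA HMM -scalemxAr.
move/eqP; rewrite -subr_eq0 -scalerBl scalemx_eq0 (negbTE v0) orbF.
rewrite -mulrBl mulf_eq0 subr_eq0 => /orP[] /eqP; first by right.
by left.
Qed.
End Eig.

Lemma normc1 (R : rcfType) m (u : 'cV[R]_m) : normc u = 1 -> dotc u u = 1.
Proof.
have d0 : 0 <= dotc u u.
  rewrite /dotc mxE; apply: sumr_ge0 => l _; rewrite !mxE -expr2; exact: sqr_ge0.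
by rewrite /normc => E; rewrite -(sqr_sqrtr d0) E expr1n.
Qed.

Lemma Mij (R : rcfType) m p (X : 'M[R]_(m, p)) i j :
  (X^T *m X) i j = dotc (col i X) (col j X).
Proof. by rewrite /dotc !mxE; apply: eq_bigr => l _; rewrite !mxE. Qed.

Theorem corollary5 (R : rcfType) (m n : nat) (W : 'M[R]_(m, n)) (lamk : R) :
  (forall i : 'I_n, col i W != 0 /\
     exists2 mu : R, 0 < mu & Fmat W *m col i W = mu *: col i W) ->
  0 < lamk ->
  (exists2 v : 'cV[R]_m, v != 0 & Fmat W *m v = lamk *: v) ->
  let p := #|cluster W lamk| in
  let M := gramMx W lamk in
  let one : 'rV[R]_p := const_mx 1 in
  let one_perp := kermx (const_mx 1 : 'M[R]_(p, 1)) in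
  simplex_geometry (clusterMx W lamk) <->
  ((kermx M^T == one)%MS /\            (* ker M_k = span 1 *)
      (M^T == one_perp)%MS /\             (* Im M_k = 1^perp *)
      (eigenspace M^T 0 == one)%MS /\     (* eigenvalue 0 with eigenspace span 1 *)
      (eigenspace M^T lamk == one_perp)%MS /\ (* eigenvalue lamk with eigenspace 1^perp *)
      (forall a : R, eigenvalue M^T a -> a = 0 \/ a = lamk) /\
      lamk = p%:R / (\rank (clusterMx W lamk))%:R).
Proof.
move=> Hcol Hlam _ p M one one_perp.
set X := clusterMx W lamk.
have Hmu : forall i, exists mu, Fmat W *m col i W = mu *: col i W.
  by move=> i; case: (Hcol i) => _ [mu _ E]; exists mu.
have FX : Fmat W *m X = lamk *: X.
  apply/matrixP=> a j; rewrite !mxE.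
  have := enum_valP j; rewrite inE => /eqP /matrixP /(_ a 0); rewrite !mxE => <-.
  by apply: eq_bigr => l _; rewrite !mxE.
have XM : X *m M = lamk *: X by rewrite /M -(@key R m n W lamk Hmu) FX.
have MM : M *m M = lamk *: M by rewrite {1}/M /gramMx -/X -mulmxA XM scalemxAr.
have MT : M^T = M by rewrite /M /gramMx trmx_mul trmxK.
rewrite MT.
have l0 : lamk != 0 by rewrite gt_eqF.
have rkX : \rank X = \rank M.
  apply/eqP; rewrite eqn_leq; apply/andP; split.
    have -> : X = (lamk^-1 *: X) *m M by rewrite -scalemxAl XM scalerA mulVf // scale1r.
    exact: mxrankM_maxr.
  exact: mxrankM_maxr.
have E0 := @eig0 _ _ M.
have EL := eiglam MM l0.
have EV := eigvals MM.
have rkc : (0 < p)%N -> \rank (const_mx 1 : 'M[R]_(p,1)) = 1%N.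
  move=> p0; apply/eqP; rewrite eqn_leq rank_leq_col lt0n mxrank_eq0.
  apply/eqP => /matrixP/(_ (Ordinal p0) 0); rewrite !mxE => /eqP; by rewrite oner_eq0.
have rkperp : \rank one_perp = (p - \rank (const_mx 1%R : 'M[R]_(p,1)))%N := mxrank_ker _.
split.
- case=> p2 [Hn Hd].
  have Md : forall i j, dotc (col i X) (col j X) = M i j.
    by move=> i j; rewrite /M /gramMx -/X Mij.
  have [k pk] : exists k, p = k.+2 by exists (p - 2)%N; rewrite -addn2 subnK.
  set r : R := k.+1%:R.
  have r0 : r != 0 by rewrite pnatr_eq0.
  have pE : p%:R = r + 1 :> R by rewrite pk /r natr1.
  have p0 : p%:R != 0 :> R by rewrite pk pnatr_eq0.
  have pm1 : p.-1%:R = r :> R by rewrite pk.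
  have r10 : r + 1 != 0 by rewrite -pE.
  clearbody r.
  set a : R := (r + 1) / r.
  have a0 : a != 0 by rewrite /a mulf_neq0 ?invr_eq0.
  have Mf : M = a *: Qm R p.
    apply/matrixP => i j; rewrite -Md.
    have [<-|ij] := eqVneq i j.
      rewrite normc1 // /Qm !mxE eqxx pE /a /=; field; by rewrite r0 r10.
    rewrite (Hd _ _ ij) /Qm !mxE (negbTE ij) -/p pm1 pE /a /=; field; by rewrite r0 r10.
  have oneM : one *m M = 0 by rewrite Mf -scalemxAr (oneQ p0) scaler0.
  have Mc : M *m (const_mx 1 : 'M[R]_(p,1)) = 0 by rewrite Mf -scalemxAl (Qc p0) scaler0.
  have H1 : (kermx M == one)%MS.
    apply/andP; split; last by apply/sub_kermxP.
    have KQ : kermx M *m Qm R p = 0.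
      have := mulmx_ker M; rewrite Mf -scalemxAr => /eqP.
      by rewrite scalemx_eq0 (negbTE a0) /= => /eqP.
    rewrite (AQ_0 KQ); exact: submxMl.
  have H2 : (M == one_perp)%MS.
    apply/andP; split; first by apply/sub_kermxP.
    have Kc : one_perp *m (const_mx 1 : 'M[R]_(p,1)) = 0 := mulmx_ker _.
    have -> : one_perp = (a^-1 *: one_perp) *m M.
      by rewrite Mf -scalemxAl -scalemxAr scalerA mulVf // scale1r (AQ_c Kc).
    exact: submxMl.
  have rkM : \rank M = p.-1.
    by rewrite (eqmx_rank H2) rkperp rkc ?subn1 // pk.
  have M0 : M != 0 by rewrite -mxrank_eq0 rkM pk.
  have la : lamk = a.
    have MMa : M *m M = a *: M by rewrite {1}Mf -scalemxAl Mf -scalemxAr (QQ p0).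
    move: MMa; rewrite MM => /eqP; rewrite -subr_eq0 -scalerBl scalemx_eq0 (negbTE M0) orbF subr_eq0.
    by move/eqP.
  split; first exact H1. split; first exact H2. split; first by rewrite E0.
  split.
    move/eqmxP: EL => EL'; move/eqmxP: H2 => H2'.
    apply/eqmxP; exact: eqmx_trans EL' H2'.
  split; first exact EV.
  by rewrite -/X rkX rkM la pm1 /a pE.
- case=> H1 [H2 [_ [_ [_ H6]]]].
  rewrite -/X in H6.
  have Md : forall i j, dotc (col i X) (col j X) = M i j.
    by move=> i j; rewrite /M /gramMx -/X Mij.
  have rkM : \rank M = \rank one_perp := eqmx_rank H2.
  have [p0|pgt0] := posnP p.
    by move: H6; rewrite p0 mul0r => E; by rewrite E eqxx in l0.
  have rX : \rank X = p.-1 by rewrite rkX rkM rkperp rkc // subn1.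
  have p2 : (1 < p)%N.
    case: (ltnP 1 p) => // ple1.
    have p1 : p = 1%N by apply/eqP; rewrite eqn_leq ple1 pgt0.
    by move: H6; rewrite rX p1 /= invr0 mulr0 => E; by rewrite E eqxx in l0.
  have [k pk] : exists k, p = k.+2 by exists (p - 2)%N; rewrite -addn2 subnK.
  set r : R := k.+1%:R.
  have r0 : r != 0 by rewrite pnatr_eq0.
  have pE : p%:R = r + 1 :> R by rewrite pk /r natr1.
  have p0 : p%:R != 0 :> R by rewrite pk pnatr_eq0.
  have pm1 : p.-1%:R = r :> R by rewrite pk.
  have r10 : r + 1 != 0 by rewrite -pE.
  clearbody r.
  have lE : lamk = (r + 1) / r by rewrite H6 rX pm1 pE.
  have oneM : one *m M = 0 by apply/sub_kermxP; case/andP: H1.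
  have QM : Qm R p *m M = M.
    by rewrite /Qm mulmxBl mul1mx -scalemxAl -Jdef -mulmxA oneM mulmx0 scaler0 subr0.
  have QsubM : (Qm R p <= M)%MS.
    case/andP: H2 => _ H2b; apply: submx_trans H2b.
    by apply/sub_kermxP; exact: Qc.
  have Mf : M = lamk *: Qm R p.
    case/submxP: QsubM => D HD.
    by rewrite -{1}QM {1}HD -mulmxA MM -scalemxAr -HD.
  split; first exact p2.
  split.
    move=> i; rewrite /normc Md Mf /Qm !mxE eqxx lE pE /=.
    rewrite (_ : _ * _ = 1) ?sqrtr1 //; field; by rewrite r0 r10.
  move=> i j ij; rewrite Md Mf /Qm !mxE (negbTE ij) -/p pm1 lE pE /=.
  field; by rewrite r0 r10.
Qed.
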